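(* (a) Soundness $\Delta^{\mathcal T}_{\mathcal R}\triangleleft\lambda^{\mathcal T}_\cap$ holds for $\Delta^{CD}_{\equiv}$, $\Delta^{CDV}_{\equiv}$, $\Delta^{CDS}_{\equiv}$, $\Delta^{BCD}_{\equiv}$, $\Delta^{CDS}_{=_\beta}$ and $\Delta^{BCD}_{=_\beta}$, and fails for $\Delta^{CD}_{=_\beta}$, $\Delta^{CDV}_{=_\beta}$, $\Delta^{CDV}_{=_{\beta\eta}}$ and $\Delta^{BCD}_{=_{\beta\eta}}$. (b) Completeness $\Delta^{\mathcal T}_{\mathcal R}\triangleright\lambda^{\mathcal T}_\cap$ holds for all ten systems $\Delta^{\mathcal T}_{\equiv}$, $\Delta^{\mathcal T}_{=_\beta}$ ($\mathcal T\in\{CD,CDS,CDV,BCD\}$), $\Delta^{CDV}_{=_{\beta\eta}}$, $\Delta^{BCD}_{=_{\beta\eta}}$. Consequently $\Delta^{\mathcal T}_{\mathcal R}\sim\lambda^{\mathcal T}_\cap$ exactly for the six systems listed as sound in (a).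
   Context: Type atoms: a set $\mathbb{A}$ of symbols; $\omega$ denotes a distinguished atom (the universal type). $\mathbb{A}_\infty=\{\mathtt a_i\mid i\in\mathbb N\}$ with each $\mathtt a_i\neq\omega$, and $\mathbb{A}^\omega_\infty=\mathbb{A}_\infty\cup\{\omega\}$. Intersection types over $\mathbb A$: $\sigma::= a\mid\sigma\to\sigma\mid\sigma\cap\sigma$ ($a\in\mathbb A$). An intersection type theory $\mathcal T$ over $\mathbb A$ is a set of inequalities $\sigma\le\tau$ (written $\sigma\le_{\mathcal T}\tau$) closed under (refl) $\sigma\le\sigma$; (incl) $\sigma\cap\tau\le\sigma$ and $\sigma\cap\tau\le\tau$; (glb) $\rho\le\sigma$ and $\rho\le\tau$ imply $\rho\le\sigma\cap\tau$; (trans) $\sigma\le\tau$ and $\tau\le\rho$ imply $\sigma\le\rho$. Additional axioms/rules: $(\omega_{top})$ $\sigma\le\omega$; $(\omega_{\to})$ $\omega\le\sigma\to\omega$; $(\to\cap)$ $(\sigma\to\tau)\cap(\sigma\to\rho)\le\sigma\to(\tau\cap\rho)$; $(\to)$ $\sigma_2\le\sigma_1$ and $\tau_1\le\tau_2$ imply $\sigma_1\to\tau_1\le\sigma_2\to\tau_2$. $\mathcal T_{CD}$ = smallest type theory over $\mathbb A_\infty$; $\mathcal T_{CDS}$ = smallest over $\mathbb A^\omega_\infty$ containing $(\omega_{top})$; $\mathcal T_{CDV}$ = smallest over $\mathbb A_\infty$ closed under $(\to)$ and $(\to\cap)$; $\mathcal T_{BCD}$ = smallest over $\mathbb A^\omega_\infty$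 closed under $(\to),(\to\cap),(\omega_{top}),(\omega_\to)$. We abbreviate these as CD, CDS, CDV, BCD. Type assignment: for a type theory $\mathcal T$ over atoms $\mathbb A$, $\lambda^{\mathcal T}_\cap$ derives judgments $B\vdash^{\mathcal T}_\cap M:\sigma$ for pure $\lambda$-terms $M$ and bases $B$ (finite sets of declarations $x{:}\sigma$ with distinct variables) by: (ax) $B\vdash x:\sigma$ if $x{:}\sigma\in B$; ($\to$I) from $B,x{:}\sigma\vdash M:\tau$ infer $B\vdash\lambda x.M:\sigma\to\tau$; ($\to$E) from $B\vdash M:\sigma\to\tau$ and $B\vdash N:\sigma$ infer $B\vdash MN:\tau$; ($\cap$I) from $B\vdash M:\sigma$ and $B\vdash M:\tau$ infer $B\vdash M:\sigma\cap\tau$; ($\cap$E) from $B\vdash M:\sigma\cap\tau$ infer $B\vdash M:\sigma$ and $B\vdash M:\tau$; (top) $B\vdash M:\omega$ if $\omega\in\mathbb A$; ($\le_{\mathcal T}$) from $B\vdash M:\sigma$ and $\sigma\le_{\mathcal T}\tau$ infer $B\vdash M:\tau$. $\Delta$-terms: $\Delta::=u_\Delta\mid x\mid\lambda x{:}\sigma.\Delta\mid\Delta\,\Delta\mid\langle\Delta,\Delta\rangle\mid pr_1\Delta\mid pr_2\Delta\mid\Delta^\sigma$, where for every (not necessarily typable) $\Delta$-term $\Delta$ there is a constant $u_\Delta$. The essence $\|\Delta\|$ is the pure $\lambda$-term defined by $\|x\|=x$, $\|u_\Delta\|=\|\Delta\|$, $\|\Delta^\sigma\|=\|\Delta\|$,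 $\|\lambda x{:}\sigma.\Delta\|=\lambda x.\|\Delta\|$, $\|\Delta_1\Delta_2\|=\|\Delta_1\|\,\|\Delta_2\|$, $\|\langle\Delta_1,\Delta_2\rangle\|=\|\Delta_1\|$, $\|pr_i\Delta\|=\|\Delta\|$. Let $\mathcal R$ be one of $\equiv$ (syntactic identity up to $\alpha$), $=_\beta$, $=_{\beta\eta}$ on pure $\lambda$-terms. The typed system $\Delta^{\mathcal T}_{\mathcal R}$ derives $B\vdash^{\mathcal T}_{\mathcal R}\Delta:\sigma$ by: (top) $B\vdash u_\Delta:\omega$ if $\omega\in\mathbb A$; (ax) $B\vdash x:\sigma$ if $x{:}\sigma\in B$; ($\to$I) from $B,x{:}\sigma\vdash\Delta:\tau$ infer $B\vdash\lambda x{:}\sigma.\Delta:\sigma\to\tau$; ($\to$E) from $B\vdash\Delta_1:\sigma\to\tau$ and $B\vdash\Delta_2:\sigma$ infer $B\vdash\Delta_1\Delta_2:\tau$; ($\cap$I) from $B\vdash\Delta_1:\sigma$, $B\vdash\Delta_2:\tau$ and $\|\Delta_1\|\mathrel{\mathcal R}\|\Delta_2\|$ infer $B\vdash\langle\Delta_1,\Delta_2\rangle:\sigma\cap\tau$; ($\cap$E$_1$) from $B\vdash\Delta:\sigma\cap\tau$ infer $B\vdash pr_1\Delta:\sigma$; ($\cap$E$_2$) from $B\vdash\Delta:\sigma\cap\tau$ infer $B\vdash pr_2\Delta:\tau$; ($\le_{\mathcal T}$) from $B\vdash\Delta:\sigma$ and $\sigma\le_{\mathcal T}\tau$ infer $B\vdash\Delta^\tau:\tau$.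 We write $\Delta^{CD}_{\mathcal R}$ for $\Delta^{\mathcal T_{CD}}_{\mathcal R}$, etc. Soundness $\Delta^{\mathcal T}_{\mathcal R}\triangleleft\lambda^{\mathcal T}_\cap$: for all $B,\Delta,\sigma$, $B\vdash^{\mathcal T}_{\mathcal R}\Delta:\sigma$ implies $B\vdash^{\mathcal T}_\cap\|\Delta\|:\sigma$. Completeness $\Delta^{\mathcal T}_{\mathcal R}\triangleright\lambda^{\mathcal T}_\cap$: for all $B,M,\sigma$, $B\vdash^{\mathcal T}_\cap M:\sigma$ implies there is $\Delta$ with $M\equiv\|\Delta\|$ and $B\vdash^{\mathcal T}_{\mathcal R}\Delta:\sigma$. Isomorphism $\Delta^{\mathcal T}_{\mathcal R}\sim\lambda^{\mathcal T}_\cap$: both soundness and completeness. *)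

(* Defs.v *)
From Stdlib Require Import List Arith Relations.
Import ListNotations.
Unset Implicit Arguments.

Inductive ty (A : Type) : Type :=
| TAtom : A -> ty A
| TArr  : ty A -> ty A -> ty A
| TInt  : ty A -> ty A -> ty A.
Arguments TAtom {A} _.
Arguments TArr {A} _ _.
Arguments TInt {A} _ _.

(* A "system" fixes the atom set, whether the distinguished atom omega
   belongs to it (omega = Some w), and whether the arrow rules
   (->) and (->cap) are part of the theory. *)
Record system : Type := Sys {
  atoms : Type;
  omega : option atoms;
  arrowRules : bool }.

(* A_infinity = { a_i | i in N } represented by nat;
   A^omega_infinity = A_infinity + {omega} represented by option nat,
   with None = omega and Some i = a_i. *)
Definition CD  : system := @Sys nat None false.
Definition CDS : system := @Sys (option nat) (Some None) false.
Definition CDV : system := @Sys nat None true.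
Definition BCD : system := @Sys (option nat) (Some None) true.

(* The smallest intersection type theory over the atoms of S closed under
   the rules selected by S:
   CD : none; CDS : (omega_top); CDV : (->), (->cap);
   BCD : (->), (->cap), (omega_top), (omega_->). *)
Inductive tle (S : system) : ty (atoms S) -> ty (atoms S) -> Prop :=
| tle_refl  : forall s, tle S s s
| tle_incl1 : forall s t, tle S (TInt s t) s
| tle_incl2 : forall s t, tle S (TInt s t) t
| tle_glb   : forall r s t, tle S r s -> tle S r t -> tle S r (TInt s t)
| tle_trans : forall s t r, tle S s t -> tle S t r -> tle S s r
| tle_omega_top : forall w s, omega S = Some w -> tle S s (TAtom w)
| tle_omega_arr : forall w s, omega S = Some w -> arrowRules S = true ->
    tle S (TAtom w) (TArr s (TAtom w))
| tle_arr_int : forall s t r, arrowRules S = true ->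
    tle S (TInt (TArr s t) (TArr s r)) (TArr s (TInt t r))
| tle_arr : forall s1 s2 t1 t2, arrowRules S = true ->
    tle S s2 s1 -> tle S t1 t2 -> tle S (TArr s1 t1) (TArr s2 t2).

(* ---------- Pure lambda terms (de Bruijn indices: alpha-equivalence is
   syntactic equality) ---------- *)
Inductive term : Type :=
| Var : nat -> term
| Lam : term -> term
| App : term -> term -> term.

Fixpoint shift (c : nat) (t : term) : term :=
  match t with
  | Var n => if n <? c then Var n else Var (S n)
  | Lam t => Lam (shift (S c) t)
  | App a b => App (shift c a) (shift c b)
  end.

Fixpoint subst (k : nat) (u : term) (t : term) : term :=
  match t with
  | Var n => match Nat.compare n k with
             | Lt => Var n
             | Eq => u
             | Gt => Var (pred n)
             end
  | Lam t => Lam (subst (S k) (shift 0 u) t)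
  | App a b => App (subst k u a) (subst k u b)
  end.

Inductive beta : term -> term -> Prop :=
| beta_red  : forall t u, beta (App (Lam t) u) (subst 0 u t)
| beta_lam  : forall t t', beta t t' -> beta (Lam t) (Lam t')
| beta_appl : forall a a' b, beta a a' -> beta (App a b) (App a' b)
| beta_appr : forall a b b', beta b b' -> beta (App a b) (App a b').

Inductive betaeta : term -> term -> Prop :=
| be_beta : forall t u, betaeta (App (Lam t) u) (subst 0 u t)
| be_eta  : forall m, betaeta (Lam (App (shift 0 m) (Var 0))) m
| be_lam  : forall t t', betaeta t t' -> betaeta (Lam t) (Lam t')
| be_appl : forall a a' b, betaeta a a' -> betaeta (App a b) (App a' b)
| be_appr : forall a b b', betaeta b b' -> betaeta (App a b) (App a b').

Definition eq_syn   : term -> term -> Prop := @eq term.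
Definition eq_beta  : term -> term -> Prop := clos_refl_sym_trans term beta.
Definition eq_betaeta : term -> term -> Prop := clos_refl_sym_trans term betaeta.

(* ---------- Bases: position i of the list holds the declaration (if any)
   of the free variable with de Bruijn index i. ---------- *)
Definition basis (S : system) := list (option (ty (atoms S))).

Definition decl (S : system) (B : basis S) (x : nat) (s : ty (atoms S)) : Prop :=
  nth_error B x = Some (Some s).
Arguments decl : clear implicits.

Inductive lty (S : system) : basis S -> term -> ty (atoms S) -> Prop :=
| lty_ax : forall B x s, decl S B x s -> lty S B (Var x) s
| lty_lam : forall B M s t, lty S (Some s :: B) M t -> lty S B (Lam M) (TArr s t)
| lty_app : forall B M N s t, lty S B M (TArr s t) -> lty S B N s -> lty S B (App M N) t
| lty_intI : forall B M s t, lty S B M s -> lty S B M t -> lty S B M (TInt s t)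
| lty_intE1 : forall B M s t, lty S B M (TInt s t) -> lty S B M s
| lty_intE2 : forall B M s t, lty S B M (TInt s t) -> lty S B M t
| lty_top : forall B M w, omega S = Some w -> lty S B M (TAtom w)
| lty_le : forall B M s t, lty S B M s -> tle S s t -> lty S B M t.

Inductive dterm (A : Type) : Type :=
| DU    : dterm A -> dterm A
| DVar  : nat -> dterm A
| DLam  : ty A -> dterm A -> dterm A
| DApp  : dterm A -> dterm A -> dterm A
| DPair : dterm A -> dterm A -> dterm A
| DPr1  : dterm A -> dterm A
| DPr2  : dterm A -> dterm A
| DCoe  : dterm A -> ty A -> dterm A.
Arguments DU {A} _.
Arguments DVar {A} _.
Arguments DLam {A} _ _.
Arguments DApp {A} _ _.
Arguments DPair {A} _ _.
Arguments DPr1 {A} _.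
Arguments DPr2 {A} _.
Arguments DCoe {A} _ _.

Fixpoint essence {A : Type} (d : dterm A) : term :=
  match d with
  | DU d => essence d
  | DVar x => Var x
  | DLam _ d => Lam (essence d)
  | DApp d1 d2 => App (essence d1) (essence d2)
  | DPair d1 _ => essence d1
  | DPr1 d => essence d
  | DPr2 d => essence d
  | DCoe d _ => essence d
  end.

Inductive dty (S : system) (R : term -> term -> Prop)
  : basis S -> dterm (atoms S) -> ty (atoms S) -> Prop :=
| dty_top : forall B d w, omega S = Some w -> dty S R B (DU d) (TAtom w)
| dty_ax : forall B x s, decl S B x s -> dty S R B (DVar x) s
| dty_lam : forall B d s t, dty S R (Some s :: B) d t ->
    dty S R B (DLam s d) (TArr s t)
| dty_app : forall B d1 d2 s t, dty S R B d1 (TArr s t) -> dty S R B d2 s ->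
    dty S R B (DApp d1 d2) t
| dty_intI : forall B d1 d2 s t, dty S R B d1 s -> dty S R B d2 t ->
    R (essence d1) (essence d2) -> dty S R B (DPair d1 d2) (TInt s t)
| dty_intE1 : forall B d s t, dty S R B d (TInt s t) -> dty S R B (DPr1 d) s
| dty_intE2 : forall B d s t, dty S R B d (TInt s t) -> dty S R B (DPr2 d) t
| dty_le : forall B d s t, dty S R B d s -> tle S s t -> dty S R B (DCoe d t) t.

Definition sound (S : system) (R : term -> term -> Prop) : Prop :=
  forall (B : basis S) (d : dterm (atoms S)) (s : ty (atoms S)),
    dty S R B d s -> lty S B (essence d) s.

Definition complete (S : system) (R : term -> term -> Prop) : Prop :=
  forall (B : basis S) (M : term) (s : ty (atoms S)),
    lty S B M s -> exists d : dterm (atoms S), M = essence d /\ dty S R B d s.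

Definition isomorphic (S : system) (R : term -> term -> Prop) : Prop :=
  sound S R /\ complete S R.

(* Main.v *)
Require Import Defs.
From Stdlib Require Import List Arith Relations Lia.
Import ListNotations.

Fixpoint leaves {A} (t : ty A) : list (ty A) :=
  match t with TInt a b => leaves a ++ leaves b | _ => [t] end.

Lemma leaf_elim Sy : forall t u, In u (leaves t) -> tle Sy t u.
Proof.
  induction t; simpl; intros u H.
  - destruct H as [<-|[]]; apply tle_refl.
  - destruct H as [<-|[]]; apply tle_refl.
  - apply in_app_or in H as [H|H].
    + eapply tle_trans; [apply tle_incl1| auto].
    + eapply tle_trans; [apply tle_incl2| auto].
Qed.

Lemma lty_leaves Sy B M : forall t, (forall u, In u (leaves t) -> lty Sy B M u) -> lty Sy B M t.
Proof.
  induction t; simpl; intros H.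
  - apply H; auto.
  - apply H; auto.
  - apply lty_intI; [apply IHt1|apply IHt2]; intros; apply H; apply in_or_app; auto.
Qed.

Lemma leaves_not_int {A} : forall (t : ty A) u, In u (leaves t) -> forall p q, u <> TInt p q.
Proof.
  induction t; simpl; intros u H p q.
  - destruct H as [<-|[]]; discriminate.
  - destruct H as [<-|[]]; discriminate.
  - apply in_app_or in H as [H|H]; eauto.
Qed.

Lemma nth_error_mid {X} (B1 B2 : list X) x : nth_error (B1 ++ x :: B2) (length B1) = Some x.
Proof. rewrite nth_error_app2 by lia. rewrite Nat.sub_diag. reflexivity. Qed.

Lemma nth_error_swap {X} (B1 B2 : list X) a b n : n <> length B1 ->
  nth_error (B1 ++ a :: B2) n = nth_error (B1 ++ b :: B2) n.
Proof.
  intros Hn. destruct (Nat.lt_ge_cases n (length B1)).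
  - rewrite !nth_error_app1 by lia. reflexivity.
  - rewrite !nth_error_app2 by lia. destruct (n - length B1) eqn:E; [lia|reflexivity].
Qed.

Lemma weaken Sy : forall B M T, lty Sy B M T -> forall B1 B2 y, B = B1 ++ B2 ->
  lty Sy (B1 ++ y :: B2) (shift (length B1) M) T.
Proof.
  induction 1; intros B1 B2 y HB; subst B; simpl.
  - unfold decl in H.
    destruct (Nat.ltb_spec x (length B1)).
    + apply lty_ax. unfold decl. rewrite nth_error_app1 by lia. rewrite nth_error_app1 in H by lia. exact H.
    + apply lty_ax. unfold decl. rewrite nth_error_app2 by lia. rewrite nth_error_app2 in H by lia.
      replace (S x - length B1) with (S (x - length B1)) by lia. exact H.
  - apply lty_lam. exact (IHlty (Some s :: B1) B2 y eq_refl).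
  - eapply lty_app; [exact (IHlty1 B1 B2 y eq_refl)|exact (IHlty2 B1 B2 y eq_refl)].
  - apply lty_intI; [exact (IHlty1 B1 B2 y eq_refl)|exact (IHlty2 B1 B2 y eq_refl)].
  - eapply lty_intE1; exact (IHlty B1 B2 y eq_refl).
  - eapply lty_intE2; exact (IHlty B1 B2 y eq_refl).
  - apply lty_top; auto.
  - eapply lty_le; [exact (IHlty B1 B2 y eq_refl)|exact H0].
Qed.

Lemma shift_inv_var c M n : shift c M = Var n ->
  exists m, M = Var m /\ ((m < c /\ n = m) \/ (c <= m /\ n = S m)).
Proof.
  destruct M as [m| |]; simpl; intro H; try discriminate.
  exists m; split; auto. revert H; destruct (Nat.ltb_spec m c) as [Hc|Hc]; intro E; injection E; intros; subst.
  - left; split; auto.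
  - right; split; auto.
Qed.

Lemma shift_inv_lam c M X : shift c M = Lam X -> exists M', M = Lam M' /\ X = shift (S c) M'.
Proof.
  destruct M as [m| |]; simpl; intro H; try discriminate.
  - revert H; destruct (m <? c); intro H; discriminate.
  - injection H; intros; subst; eauto.
Qed.

Lemma shift_inv_app c M X Y : shift c M = App X Y ->
  exists M1 M2, M = App M1 M2 /\ X = shift c M1 /\ Y = shift c M2.
Proof.
  destruct M as [m| |]; simpl; intro H; try discriminate.
  - revert H; destruct (m <? c); intro H; discriminate.
  - injection H; intros; subst; eauto.
Qed.

Lemma strengthen Sy : forall B X T, lty Sy B X T -> forall B1 B2 y M, B = B1 ++ y :: B2 ->
  shift (length B1) M = X -> lty Sy (B1 ++ B2) M T.
Proof.
  induction 1; intros B1 B2 y M0 HB HX; subst B.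
  - apply shift_inv_var in HX as [m [-> [[Hl ->]|[Hl ->]]]]; apply lty_ax; unfold decl in *.
    + rewrite nth_error_app1 in H by lia. rewrite nth_error_app1 by lia. exact H.
    + rewrite nth_error_app2 in H by lia. rewrite nth_error_app2 by lia.
      replace (S m - length B1) with (S (m - length B1)) in H by lia. exact H.
  - apply shift_inv_lam in HX as [M' [-> ->]].
    apply lty_lam. exact (IHlty (Some s :: B1) B2 y M' eq_refl eq_refl).
  - apply shift_inv_app in HX as [M1 [M2 [-> [-> ->]]]].
    eapply lty_app; [exact (IHlty1 B1 B2 y M1 eq_refl eq_refl)| exact (IHlty2 B1 B2 y M2 eq_refl eq_refl)].
  - apply lty_intI; [exact (IHlty1 B1 B2 y M0 eq_refl HX)|exact (IHlty2 B1 B2 y M0 eq_refl HX)].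
  - eapply lty_intE1; exact (IHlty B1 B2 y M0 eq_refl HX).
  - eapply lty_intE2; exact (IHlty B1 B2 y M0 eq_refl HX).
  - apply lty_top; auto.
  - eapply lty_le; [exact (IHlty B1 B2 y M0 eq_refl HX)| exact H0].
Qed.

Lemma subst_lemma Sy : forall B M T, lty Sy B M T -> forall B1 B2 s u, B = B1 ++ Some s :: B2 ->
  lty Sy (B1 ++ B2) u s -> lty Sy (B1 ++ B2) (subst (length B1) u M) T.
Proof.
  induction 1; intros B1 B2 s0 u HB Hu; subst B; simpl.
  - unfold decl in H. destruct (Nat.compare_spec x (length B1)).
    + subst. rewrite nth_error_mid in H. injection H as E; subst; exact Hu.
    + apply lty_ax; unfold decl. rewrite nth_error_app1 in H by lia. rewrite nth_error_app1 by lia. exact H.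
    + apply lty_ax; unfold decl. rewrite nth_error_app2 in H by lia. rewrite nth_error_app2 by lia.
      replace (x - length B1) with (S (pred x - length B1)) in H by lia. exact H.
  - apply lty_lam. apply (IHlty (Some s :: B1) B2 s0 (shift 0 u) eq_refl).
    exact (weaken Sy _ _ _ Hu nil (B1++B2) (Some s) eq_refl).
  - eapply lty_app; [exact (IHlty1 B1 B2 s0 u eq_refl Hu)|exact (IHlty2 B1 B2 s0 u eq_refl Hu)].
  - apply lty_intI; [exact (IHlty1 B1 B2 s0 u eq_refl Hu)|exact (IHlty2 B1 B2 s0 u eq_refl Hu)].
  - eapply lty_intE1; exact (IHlty B1 B2 s0 u eq_refl Hu).
  - eapply lty_intE2; exact (IHlty B1 B2 s0 u eq_refl Hu).
  - apply lty_top; auto.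
  - eapply lty_le; [exact (IHlty B1 B2 s0 u eq_refl Hu)|exact H0].
Qed.

Lemma narrow Sy : forall B M T, lty Sy B M T -> forall B1 B2 s s', B = B1 ++ Some s :: B2 ->
  tle Sy s' s -> lty Sy (B1 ++ Some s' :: B2) M T.
Proof.
  induction 1; intros B1 B2 s0 s' HB Hle; subst B.
  - destruct (Nat.eq_dec x (length B1)).
    + subst. unfold decl in H. rewrite nth_error_mid in H. injection H as E; subst.
      eapply lty_le; [apply lty_ax; unfold decl; apply nth_error_mid| exact Hle].
    + apply lty_ax. unfold decl in *. rewrite (nth_error_swap B1 B2 _ (Some s0)) by auto. exact H.
  - apply lty_lam. exact (IHlty (Some s :: B1) B2 s0 s' eq_refl Hle).
  - eapply lty_app; [exact (IHlty1 B1 B2 s0 s' eq_refl Hle)|exact (IHlty2 B1 B2 s0 s' eq_refl Hle)].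
  - apply lty_intI; [exact (IHlty1 B1 B2 s0 s' eq_refl Hle)|exact (IHlty2 B1 B2 s0 s' eq_refl Hle)].
  - eapply lty_intE1; exact (IHlty B1 B2 s0 s' eq_refl Hle).
  - eapply lty_intE2; exact (IHlty B1 B2 s0 s' eq_refl Hle).
  - apply lty_top; auto.
  - eapply lty_le; [exact (IHlty B1 B2 s0 s' eq_refl Hle)|exact H0].
Qed.

Fixpoint bigint {A} (w : A) (l : list (ty A)) : ty A :=
  match l with [] => TAtom w | x :: l => TInt x (bigint w l) end.

Definition Q (Sy : system) (w : atoms Sy) (s u : ty (atoms Sy)) : Prop :=
  match u with
  | TAtom a => a = w \/ In (TAtom a) (leaves s)
  | TArr sg tu => exists L : list (ty (atoms Sy) * ty (atoms Sy)),
      (forall p, In p L -> In (TArr (fst p) (snd p)) (leaves s) /\ tle Sy sg (fst p)) /\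
      tle Sy (bigint w (map snd L)) tu
  | TInt _ _ => True
  end.

Lemma bigint_app1 Sy w (Hw : omega Sy = Some w) : forall l1 l2,
  tle Sy (bigint w (l1 ++ l2)) (bigint w l1).
Proof.
  induction l1; simpl; intros.
  - apply tle_omega_top; auto.
  - apply tle_glb; [apply tle_incl1|eapply tle_trans; [apply tle_incl2|apply IHl1]].
Qed.

Lemma bigint_app2 Sy w : forall l1 l2, tle Sy (bigint w (l1 ++ l2)) (bigint w l2).
Proof.
  induction l1; simpl; intros.
  - apply tle_refl.
  - eapply tle_trans; [apply tle_incl2|apply IHl1].
Qed.

Lemma Q_mono Sy w s s' u : (forall v, In v (leaves s) -> In v (leaves s')) -> Q Sy w s u -> Q Sy w s' u.
Proof.
  intros Hm; destruct u; simpl.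
  - intros [?|?]; auto.
  - intros [L [HL Hle]]. exists L; split; auto. intros p Hp; destruct (HL p Hp); auto.
  - auto.
Qed.

Lemma Q_refl Sy w s u : In u (leaves s) -> Q Sy w s u.
Proof.
  destruct u; simpl; intros H; auto.
  exists [(u1,u2)]. split.
  - intros p [<-|[]]; simpl; split; auto; apply tle_refl.
  - simpl. apply tle_incl1.
Qed.

Lemma Q_trans Sy w (Hw : omega Sy = Some w) s t u :
  (forall v, In v (leaves t) -> Q Sy w s v) -> Q Sy w t u -> Q Sy w s u.
Proof.
  intros H HQ. destruct u as [a|sg tu|]; simpl in *.
  - destruct HQ as [->|Hin]; [left; auto|]. exact (H _ Hin).
  - destruct HQ as [L [HL Hle]].
    assert (HH : exists L', (forall q, In q L' -> In (TArr (fst q) (snd q)) (leaves s) /\ tle Sy sg (fst q))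
       /\ tle Sy (bigint w (map snd L')) (bigint w (map snd L))).
    { clear Hle. induction L as [|p L IH].
      - exists []. split; [intros q []| apply tle_refl].
      - destruct (HL p (or_introl eq_refl)) as [Hin Hsp].
        pose proof (H _ Hin) as HQp. simpl in HQp. destruct HQp as [Lp [HLp Hlep]].
        destruct IH as [L' [HL' HleL']]. { intros; apply HL; right; auto. }
        exists (Lp ++ L'). split.
        + intros q Hq. apply in_app_or in Hq as [Hq|Hq].
          * destruct (HLp q Hq). split; auto. eapply tle_trans; eauto.
          * apply HL'; auto.
        + rewrite map_app. simpl. apply tle_glb.
          * eapply tle_trans; [apply bigint_app1; auto|exact Hlep].
          * eapply tle_trans; [apply bigint_app2|exact HleL']. }
    destruct HH as [L' [H1 H2]]; exists L'; split; auto; eapply tle_trans; eauto.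
  - auto.
Qed.

Lemma tle_char Sy w (Hw : omega Sy = Some w) : forall s t, tle Sy s t ->
  forall u, In u (leaves t) -> Q Sy w s u.
Proof.
  induction 1; intros u Hu.
  - apply Q_refl; auto.
  - apply Q_refl; simpl; apply in_or_app; auto.
  - apply Q_refl; simpl; apply in_or_app; auto.
  - simpl in Hu; apply in_app_or in Hu as [Hu|Hu]; auto.
  - eapply Q_trans; eauto.
  - simpl in Hu; destruct Hu as [<-|[]]. simpl. left. congruence.
  - simpl in Hu; destruct Hu as [<-|[]]. simpl. exists []. split; [intros p []|].
    simpl. eapply tle_omega_top; eauto.
  - simpl in Hu; destruct Hu as [<-|[]]. simpl. exists [(s,t);(s,r)]. split.
    + intros p [<-|[<-|[]]]; simpl; split; auto using tle_refl.
    + simpl. apply tle_glb; [apply tle_incl1| eapply tle_trans; [apply tle_incl2|apply tle_incl1]].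
  - simpl in Hu; destruct Hu as [<-|[]]. simpl. exists [(s1,t1)]. split.
    + intros p [<-|[]]; simpl; auto.
    + simpl. eapply tle_trans; [apply tle_incl1|auto].
Qed.

Definition LG Sy w B M t := forall u, In u (leaves t) ->
  u = TAtom w \/ exists r tau, u = TArr r tau /\ lty Sy (Some r :: B) M tau.

Lemma lam_gen Sy w (Hw : omega Sy = Some w) : forall B X t, lty Sy B X t ->
  forall M, X = Lam M -> LG Sy w B M t.
Proof.
  induction 1; intros M0 HX; try discriminate.
  - injection HX as E; subst. intros u [<-|[]]. right; eauto.
  - intros u Hu; simpl in Hu; apply in_app_or in Hu as [Hu|Hu];
      [apply (IHlty1 M0 HX)|apply (IHlty2 M0 HX)]; auto.
  - intros u Hu. apply (IHlty M0 HX). simpl; apply in_or_app; auto.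
  - intros u Hu. apply (IHlty M0 HX). simpl; apply in_or_app; auto.
  - intros u [<-|[]]. left. congruence.
  - intros u Hu. pose proof (tle_char Sy w Hw _ _ H0 u Hu) as HQ. destruct u as [a|u1 u2|p q].
    + simpl in HQ. destruct HQ as [->|Hin]; [left; auto|].
      destruct (IHlty M0 HX _ Hin) as [?|[r [tau [Heq _]]]]; [left; auto | discriminate].
    + right. exists u1, u2. split; auto. simpl in HQ. destruct HQ as [L [HL Hle]].
      eapply lty_le; [|exact Hle].
      clear Hle. induction L as [|p L IHL]; simpl.
      * apply lty_top; auto.
      * apply lty_intI.
        -- destruct (HL p (or_introl eq_refl)) as [Hin Hs].
           destruct (IHlty M0 HX _ Hin) as [Heq|[r [tau [Heq Hty]]]]; [discriminate|].
           injection Heq as E1 E2. rewrite <- E1, <- E2 in Hty.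
           exact (narrow Sy _ _ _ Hty nil B (fst p) u1 eq_refl Hs).
        -- apply IHL. intros; apply HL; right; auto.
    + exfalso. exact (leaves_not_int _ _ Hu p q eq_refl).
Qed.

Definition AppGen Sy w := forall B P N t, lty Sy B (App P N) t -> forall u, In u (leaves t) ->
  u = TAtom w \/ exists r tau, lty Sy B P (TArr r tau) /\ lty Sy B N r /\ tle Sy tau u.

Lemma sr_redex Sy w (Hw : omega Sy = Some w) (HA : AppGen Sy w) :
  forall B M N t, lty Sy B (App (Lam M) N) t -> lty Sy B (subst 0 N M) t.
Proof.
  intros B M N t H. apply lty_leaves. intros u Hu.
  destruct (HA _ _ _ _ H u Hu) as [->|[r [tau [H1 [H2 H3]]]]].
  - apply lty_top; auto.
  - destruct (lam_gen Sy w Hw _ _ _ H1 M eq_refl (TArr r tau) (or_introl eq_refl))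
      as [E|[r' [tau' [E Hty]]]]; [discriminate|].
    injection E as E1 E2; subst.
    eapply lty_le; [|exact H3].
    exact (subst_lemma Sy _ _ _ Hty nil B r' N eq_refl H2).
Qed.

Fixpoint lift (k : nat) (N : term) : term :=
  match k with 0 => N | S k => shift 0 (lift k N) end.

Lemma lift_strip Sy : forall B1 B2 N T, lty Sy (B1 ++ B2) (lift (length B1) N) T -> lty Sy B2 N T.
Proof.
  induction B1; simpl; intros; auto. apply IHB1.
  exact (strengthen Sy _ _ _ H nil (B1++B2) a _ eq_refl eq_refl).
Qed.

Lemma combine_sig Sy w (Hw : omega Sy = Some w) B2 N (P : ty (atoms Sy) -> ty (atoms Sy) -> Prop) :
  (forall s s' u, tle Sy s' s -> P s u -> P s' u) ->
  forall l, (forall u, In u l -> exists s, P s u /\ lty Sy B2 N s) ->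
  exists s, lty Sy B2 N s /\ forall u, In u l -> P s u.
Proof.
  intros Hmono l; induction l as [|a l IH]; intros H.
  - exists (TAtom w); split; [apply lty_top; auto| intros u []].
  - destruct (H a (or_introl eq_refl)) as [s1 [P1 N1]].
    destruct IH as [s2 [N2 P2]]. { intros; apply H; right; auto. }
    exists (TInt s1 s2); split; [apply lty_intI; auto|].
    intros u [<-|Hu]; [eapply Hmono; [apply tle_incl1|eauto] | eapply Hmono; [apply tle_incl2| eauto]].
Qed.

Lemma inv_subst Sy w (Hw : omega Sy = Some w) (HA : AppGen Sy w) : forall M B1 B2 N T,
  lty Sy (B1 ++ B2) (subst (length B1) (lift (length B1) N) M) T ->
  exists s, lty Sy (B1 ++ Some s :: B2) M T /\ lty Sy B2 N s.
Proof.
  induction M as [n|M IH|M1 IH1 M2 IH2]; intros B1 B2 N T H.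
  - simpl in H. revert H. destruct (Nat.compare_spec n (length B1)) as [Hc|Hc|Hc]; intro H.
    + subst. exists T. split; [apply lty_ax; unfold decl; apply nth_error_mid | eapply lift_strip; eauto].
    + exists (TAtom w). split; [|apply lty_top; auto].
      pose proof (weaken Sy _ _ _ H B1 B2 (Some (TAtom w)) eq_refl) as H'. simpl in H'.
      revert H'. destruct (Nat.ltb_spec n (length B1)) as [Hd|Hd]; intro H'; [exact H'| lia].
    + exists (TAtom w). split; [|apply lty_top; auto].
      pose proof (weaken Sy _ _ _ H B1 B2 (Some (TAtom w)) eq_refl) as H'. simpl in H'.
      revert H'. destruct (Nat.ltb_spec (pred n) (length B1)) as [Hd|Hd]; intro H'; [lia|].
      replace (S (pred n)) with n in H' by lia. exact H'.
  - simpl in H.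
    assert (Hc : exists s, lty Sy B2 N s /\ forall u, In u (leaves T) -> lty Sy (B1 ++ Some s :: B2) (Lam M) u).
    { apply (combine_sig Sy w Hw B2 N (fun s u => lty Sy (B1 ++ Some s :: B2) (Lam M) u)).
      - intros s s' u Hle Hs. eapply narrow; [exact Hs|reflexivity|exact Hle].
      - intros u Hu. destruct (lam_gen Sy w Hw _ _ _ H _ eq_refl u Hu) as [->|[r [tau [-> Hty]]]].
        + exists (TAtom w). split; apply lty_top; auto.
        + destruct (IH (Some r :: B1) B2 N tau Hty) as [s [Hs HN]].
          exists s. split; auto. apply lty_lam. exact Hs. }
    destruct Hc as [s [HN Hs]]. exists s. split; auto. apply lty_leaves. auto.
  - simpl in H.
    assert (Hc : exists s, lty Sy B2 N s /\ forall u, In u (leaves T) -> lty Sy (B1 ++ Some s :: B2) (App M1 M2) u).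
    { apply (combine_sig Sy w Hw B2 N (fun s u => lty Sy (B1 ++ Some s :: B2) (App M1 M2) u)).
      - intros s s' u Hle Hs. eapply narrow; [exact Hs|reflexivity|exact Hle].
      - intros u Hu. destruct (HA _ _ _ _ H u Hu) as [->|[r [tau [H1 [H2 H3]]]]].
        + exists (TAtom w). split; apply lty_top; auto.
        + destruct (IH1 B1 B2 N _ H1) as [s1 [Hs1 HN1]]. destruct (IH2 B1 B2 N _ H2) as [s2 [Hs2 HN2]].
          exists (TInt s1 s2). split; [|apply lty_intI; auto].
          eapply lty_le; [|exact H3]. eapply lty_app.
          * eapply narrow; [exact Hs1|reflexivity|apply tle_incl1].
          * eapply narrow; [exact Hs2|reflexivity|apply tle_incl2]. }
    destruct Hc as [s [HN Hs]]. exists s. split; auto. apply lty_leaves. auto.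
Qed.

Lemma se_redex Sy w (Hw : omega Sy = Some w) (HA : AppGen Sy w) :
  forall B M N t, lty Sy B (subst 0 N M) t -> lty Sy B (App (Lam M) N) t.
Proof.
  intros. destruct (inv_subst Sy w Hw HA M nil B N t H) as [s [H1 H2]].
  eapply lty_app; [apply lty_lam; exact H1| exact H2].
Qed.

Lemma compat_lam Sy : forall x y, (forall B T, lty Sy B x T -> lty Sy B y T) ->
  forall B T, lty Sy B (Lam x) T -> lty Sy B (Lam y) T.
Proof.
  intros x y Hxy B T H. remember (Lam x) as X eqn:HX. revert HX.
  induction H; intro HX; try discriminate.
  - injection HX as E; subst. apply lty_lam; auto.
  - apply lty_intI; auto.
  - eapply lty_intE1; eauto.
  - eapply lty_intE2; eauto.
  - apply lty_top; auto.
  - eapply lty_le; eauto.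
Qed.

Lemma compat_app Sy : forall a a' b b', (forall B T, lty Sy B a T -> lty Sy B a' T) ->
  (forall B T, lty Sy B b T -> lty Sy B b' T) ->
  forall B T, lty Sy B (App a b) T -> lty Sy B (App a' b') T.
Proof.
  intros a a' b b' Ha Hb B T H. remember (App a b) as X eqn:HX. revert HX.
  induction H; intro HX; try discriminate.
  - injection HX as E1 E2; subst. eapply lty_app; eauto.
  - apply lty_intI; auto.
  - eapply lty_intE1; eauto.
  - eapply lty_intE2; eauto.
  - apply lty_top; auto.
  - eapply lty_le; eauto.
Qed.

Lemma beta_iff Sy w (Hw : omega Sy = Some w) (HA : AppGen Sy w) :
  forall M N, beta M N -> forall B T, lty Sy B M T <-> lty Sy B N T.
Proof.
  induction 1; intros B T; split; intro H'.
  - eapply sr_redex; eauto.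
  - eapply se_redex; eauto.
  - eapply compat_lam; [|exact H']. intros; apply IHbeta; auto.
  - eapply compat_lam; [|exact H']. intros; apply IHbeta; auto.
  - eapply compat_app; [| |exact H']; [intros; apply IHbeta; auto| auto].
  - eapply compat_app; [| |exact H']; [intros; apply IHbeta; auto| auto].
  - eapply compat_app; [| |exact H']; [auto|intros; apply IHbeta; auto].
  - eapply compat_app; [| |exact H']; [auto|intros; apply IHbeta; auto].
Qed.

Lemma eqbeta_iff Sy w (Hw : omega Sy = Some w) (HA : AppGen Sy w) :
  forall M N, eq_beta M N -> forall B T, lty Sy B M T <-> lty Sy B N T.
Proof.
  unfold eq_beta. induction 1; intros B T.
  - eapply beta_iff; eauto.
  - tauto.
  - rewrite IHclos_refl_sym_trans; tauto.
  - rewrite IHclos_refl_sym_trans1; auto.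
Qed.

Lemma cds_char : forall s t, tle CDS s t -> forall u, In u (leaves t) -> u = TAtom None \/ In u (leaves s).
Proof.
  induction 1; intros u Hu; simpl in *.
  - right; auto.
  - right; apply in_or_app; auto.
  - right; apply in_or_app; auto.
  - apply in_app_or in Hu as [Hu|Hu]; auto.
  - destruct (IHtle2 u Hu) as [?|H']; auto.
  - destruct Hu as [<-|[]]; left; congruence.
  - discriminate.
  - discriminate.
  - discriminate.
Qed.

Lemma cds_appgen : AppGen CDS None.
Proof.
  intros B P N t H. remember (App P N) as X eqn:HX. revert HX.
  induction H; intros HX u Hu; try discriminate.
  - injection HX as E1 E2; subst. right. exists s, t. split; auto. split; auto. apply leaf_elim; auto.
  - simpl in Hu; apply in_app_or in Hu as [Hu|Hu]; [apply IHlty1|apply IHlty2]; auto.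
  - apply IHlty; auto; simpl; apply in_or_app; auto.
  - apply IHlty; auto; simpl; apply in_or_app; auto.
  - simpl in Hu; destruct Hu as [<-|[]]; left; change (Some None = Some w) in H; injection H as E; subst; reflexivity.
  - destruct (cds_char _ _ H0 u Hu) as [->|Hin]; [left; reflexivity| apply IHlty; auto].
Qed.

Lemma bcd_app1 : forall B X t, lty BCD B X t -> forall P N, X = App P N ->
  exists r, lty BCD B P (TArr r t) /\ lty BCD B N r.
Proof.
  induction 1; intros P0 N0 HX; try discriminate.
  - injection HX as E1 E2; subst. eauto.
  - destruct (IHlty1 _ _ HX) as [r1 [A1 C1]]. destruct (IHlty2 _ _ HX) as [r2 [A2 C2]].
    exists (TInt r1 r2). split; [|apply lty_intI; auto].
    eapply lty_le. { apply lty_intI; [exact A1| exact A2]. }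
    eapply tle_trans; [| apply tle_arr_int; reflexivity].
    apply tle_glb.
    + eapply tle_trans; [apply tle_incl1|]. apply tle_arr; [reflexivity|apply tle_incl1|apply tle_refl].
    + eapply tle_trans; [apply tle_incl2|]. apply tle_arr; [reflexivity|apply tle_incl2|apply tle_refl].
  - destruct (IHlty _ _ HX) as [r [A1 C1]]. exists r; split; auto.
    eapply lty_le; [exact A1|]. apply tle_arr; [reflexivity|apply tle_refl|apply tle_incl1].
  - destruct (IHlty _ _ HX) as [r [A1 C1]]. exists r; split; auto.
    eapply lty_le; [exact A1|]. apply tle_arr; [reflexivity|apply tle_refl|apply tle_incl2].
  - exists (TAtom w). split; [|apply lty_top; auto].
    eapply lty_le; [apply lty_top; exact H|]. apply tle_omega_arr; [exact H|reflexivity].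
  - destruct (IHlty _ _ HX) as [r [A1 C1]]. exists r; split; auto.
    eapply lty_le; [exact A1|]. apply tle_arr; [reflexivity|apply tle_refl|exact H0].
Qed.

Lemma bcd_appgen : AppGen BCD None.
Proof.
  intros B P N t H u Hu. destruct (bcd_app1 _ _ _ H P N eq_refl) as [r [H1 H2]].
  right; exists r, t; split; auto; split; auto; apply leaf_elim; auto.
Qed.

Lemma sound_gen Sy R : (forall M N, R M N -> forall B T, lty Sy B N T -> lty Sy B M T) -> sound Sy R.
Proof.
  intros HR B d s H. induction H; simpl.
  - apply lty_top; auto.
  - apply lty_ax; auto.
  - apply lty_lam; auto.
  - eapply lty_app; eauto.
  - apply lty_intI; auto. eapply HR; eauto.
  - eapply lty_intE1; eauto.
  - eapply lty_intE2; eauto.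
  - eapply lty_le; eauto.
Qed.

Fixpoint emb {A} (a : A) (M : term) : dterm A :=
  match M with
  | Var x => DVar x
  | Lam M => DLam (TAtom a) (emb a M)
  | App M N => DApp (emb a M) (emb a N)
  end.

Lemma emb_ess {A} (a : A) M : essence (emb a M) = M.
Proof. induction M; simpl; congruence. Qed.

Lemma complete_gen Sy R : (forall M, R M M) -> complete Sy R.
Proof.
  intros HR B M s H. induction H.
  - exists (DVar x); split; [reflexivity| apply dty_ax; auto].
  - destruct IHlty as [d [-> Hd]]. exists (DLam s d); split; [reflexivity|apply dty_lam; auto].
  - destruct IHlty1 as [d1 [-> H1]], IHlty2 as [d2 [E2 H2]].
    exists (DApp d1 d2). split; [simpl; congruence|eapply dty_app; eauto].
  - destruct IHlty1 as [d1 [E1 H1]], IHlty2 as [d2 [E2 H2]]. exists (DPair d1 d2).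
    split; [simpl; auto|]. apply dty_intI; auto. rewrite <- E1, <- E2. apply HR.
  - destruct IHlty as [d [-> Hd]]. exists (DPr1 d). split; [reflexivity|eapply dty_intE1; eauto].
  - destruct IHlty as [d [-> Hd]]. exists (DPr2 d). split; [reflexivity|eapply dty_intE2; eauto].
  - exists (DU (emb w M)). split; [simpl; symmetry; apply emb_ess| apply dty_top; auto].
  - destruct IHlty as [d [-> Hd]]. exists (DCoe d t). split; [reflexivity| eapply dty_le; eauto].
Qed.

Lemma vargen Sy (H0 : omega Sy = None) : forall B X t, lty Sy B X t -> forall x, X = Var x ->
  exists s, decl Sy B x s /\ tle Sy s t.
Proof.
  induction 1; intros y HX; try discriminate.
  - injection HX as E; subst. exists s; split; auto; apply tle_refl.
  - destruct (IHlty1 _ HX) as [s1 [D1 L1]], (IHlty2 _ HX) as [s2 [D2 L2]].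
    unfold decl in *. rewrite D1 in D2. injection D2 as E; subst. exists s2; split; auto. apply tle_glb; auto.
  - destruct (IHlty _ HX) as [s1 [D1 L1]]. exists s1; split; auto. eapply tle_trans; [exact L1| apply tle_incl1].
  - destruct (IHlty _ HX) as [s1 [D1 L1]]. exists s1; split; auto. eapply tle_trans; [exact L1| apply tle_incl2].
  - congruence.
  - destruct (IHlty _ HX) as [s1 [D1 L1]]. exists s1; split; auto. eapply tle_trans; eauto.
Qed.

Lemma appgen_weak Sy (H0 : omega Sy = None) : forall B X t, lty Sy B X t -> forall P N, X = App P N ->
  exists r tau, lty Sy B P (TArr r tau) /\ lty Sy B N r.
Proof.
  induction 1; intros P0 N0 HX; try discriminate; eauto.
  - injection HX as E1 E2; subst. eauto.
  - congruence.
Qed.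

Lemma atom_leaves Sy (H0 : omega Sy = None) a : forall s t, tle Sy s t ->
  (forall u, In u (leaves s) -> u = TAtom a) -> forall u, In u (leaves t) -> u = TAtom a.
Proof.
  induction 1; intros Hs u Hu; simpl in *.
  - auto.
  - apply Hs; apply in_or_app; auto.
  - apply Hs; apply in_or_app; auto.
  - apply in_app_or in Hu as [Hu|Hu]; [apply IHtle1|apply IHtle2]; auto.
  - eapply IHtle2; [|exact Hu]. apply IHtle1; auto.
  - congruence.
  - congruence.
  - exfalso. specialize (Hs (TArr s t) (or_introl eq_refl)). discriminate.
  - exfalso. specialize (Hs (TArr s1 t1) (or_introl eq_refl)). discriminate.
Qed.

Definition Cls Sy (b : ty (atoms Sy)) t := forall r tau, In (TArr r tau) (leaves t) -> ~ tle Sy b r.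

Lemma cls_up Sy (H0 : omega Sy = None) b : forall s t, tle Sy s t -> Cls Sy b s -> Cls Sy b t.
Proof.
  unfold Cls. induction 1; intros Hs r0 tau0 Hu; simpl in *.
  - eauto.
  - apply (Hs r0 tau0); apply in_or_app; auto.
  - apply (Hs r0 tau0); apply in_or_app; auto.
  - apply in_app_or in Hu as [Hu|Hu]; [apply (IHtle1 Hs r0 tau0)|apply (IHtle2 Hs r0 tau0)]; auto.
  - exact (IHtle2 (IHtle1 Hs) r0 tau0 Hu).
  - destruct Hu as [E|[]]; discriminate.
  - congruence.
  - destruct Hu as [E|[]]. injection E as E1 E2; subst. eapply Hs. left; reflexivity.
  - destruct Hu as [E|[]]. injection E as E1 E2; subst. intro Hb.
    apply (Hs s1 t1 (or_introl eq_refl)). eapply tle_trans; eauto.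
Qed.

Notation body := (App (Lam (Var 1)) (App (Var 0) (Var 0))).

Lemma lam_body_cls Sy (H0 : omega Sy = None) (a : atoms Sy) : forall B X t, lty Sy B X t ->
  X = Lam body -> Cls Sy (TAtom a) t.
Proof.
  induction 1; intros HX; try discriminate.
  - injection HX as E; subst. intros r tau [E|[]] Hb. injection E as E1 E2; subst.
    destruct (appgen_weak Sy H0 _ _ _ H _ _ eq_refl) as [r1 [t1 [_ HA]]].
    destruct (appgen_weak Sy H0 _ _ _ HA _ _ eq_refl) as [r2 [t2 [HV _]]].
    destruct (vargen Sy H0 _ _ _ HV _ eq_refl) as [s0 [D L]].
    unfold decl in D; simpl in D; injection D as E; subst.
    assert (HH := atom_leaves Sy H0 a _ _ (tle_trans _ _ _ _ Hb L)).
    simpl in HH. assert (Hx : TArr r2 t2 = TAtom a).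
    { apply HH; [intros u [<-|[]]; reflexivity| left; reflexivity]. }
    discriminate.
  - intros r tau Hu. simpl in Hu. apply in_app_or in Hu as [Hu|Hu];
      [apply (IHlty1 HX r tau Hu) | apply (IHlty2 HX r tau Hu)].
  - intros r tau Hu. apply (IHlty HX r tau). simpl. apply in_or_app; auto.
  - intros r tau Hu. apply (IHlty HX r tau). simpl. apply in_or_app; auto.
  - congruence.
  - eapply cls_up; [exact H0| eassumption| exact (IHlty HX)].
Qed.

Lemma not_sound_None Sy (H0 : omega Sy = None) (a : atoms Sy) (R : term -> term -> Prop) :
  R (Lam body) (Lam (Var 0)) -> ~ sound Sy R.
Proof.
  intros HR Hs.
  assert (Hd : dty Sy R nil
    (DPair (DLam (TInt (TArr (TAtom a) (TAtom a)) (TAtom a))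
              (DApp (DLam (TAtom a) (DVar 1)) (DApp (DPr1 (DVar 0)) (DPr2 (DVar 0)))))
           (DLam (TAtom a) (DVar 0)))
    (TInt (TArr (TInt (TArr (TAtom a) (TAtom a)) (TAtom a)) (TInt (TArr (TAtom a) (TAtom a)) (TAtom a)))
          (TArr (TAtom a) (TAtom a)))).
  { apply dty_intI.
    - apply dty_lam. eapply dty_app.
      + apply dty_lam. apply dty_ax. reflexivity.
      + eapply dty_app.
        * eapply dty_intE1. apply dty_ax. reflexivity.
        * eapply dty_intE2. apply dty_ax. reflexivity.
    - apply dty_lam. apply dty_ax. reflexivity.
    - simpl. exact HR. }
  apply Hs in Hd. simpl in Hd. apply lty_intE2 in Hd.
  exact (lam_body_cls Sy H0 a _ _ _ Hd eq_refl (TAtom a) (TAtom a) (or_introl eq_refl) (tle_refl _ _)).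
Qed.

Lemma red_ex_beta : eq_beta (Lam body) (Lam (Var 0)).
Proof. apply rst_step. apply beta_lam. exact (beta_red (Var 1) (App (Var 0) (Var 0))). Qed.

Lemma red_ex_betaeta : eq_betaeta (Lam body) (Lam (Var 0)).
Proof. apply rst_step. apply be_lam. exact (be_beta (Var 1) (App (Var 0) (Var 0))). Qed.

Definition OnlyOm Sy (w : atoms Sy) t := forall a, In (TAtom a) (leaves t) -> a = w.

Lemma onlyom_up Sy w (Hw : omega Sy = Some w) : forall s t, tle Sy s t -> OnlyOm Sy w s -> OnlyOm Sy w t.
Proof.
  unfold OnlyOm. induction 1; intros Hs a0 Hu; simpl in *.
  - auto.
  - apply Hs; apply in_or_app; auto.
  - apply Hs; apply in_or_app; auto.
  - apply in_app_or in Hu as [Hu|Hu]; eauto.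
  - eauto.
  - destruct Hu as [E|[]]; injection E; intros; subst; congruence.
  - destruct Hu as [E|[]]; discriminate.
  - destruct Hu as [E|[]]; discriminate.
  - destruct Hu as [E|[]]; discriminate.
Qed.

Lemma lam_onlyom Sy w (Hw : omega Sy = Some w) : forall B X t, lty Sy B X t ->
  forall M, X = Lam M -> OnlyOm Sy w t.
Proof.
  induction 1; intros M0 HX; try discriminate.
  - intros a [E|[]]; discriminate.
  - intros a Hu. simpl in Hu. apply in_app_or in Hu as [Hu|Hu]; [apply (IHlty1 M0 HX)|apply (IHlty2 M0 HX)]; auto.
  - intros a Hu. apply (IHlty M0 HX). simpl. apply in_or_app; auto.
  - intros a Hu. apply (IHlty M0 HX). simpl. apply in_or_app; auto.
  - intros a [E|[]]. injection E; intros; subst; congruence.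
  - eapply onlyom_up; [exact Hw| eassumption| exact (IHlty M0 HX)].
Qed.

Lemma not_sound_BCD_betaeta : ~ sound BCD eq_betaeta.
Proof.
  intros Hs.
  assert (Hd : dty BCD eq_betaeta [Some (TAtom (Some 0))]
     (DPair (DLam (TAtom None) (DU (DApp (DVar 1) (DVar 0)))) (DVar 0))
     (TInt (TArr (TAtom None) (TAtom None)) (TAtom (Some 0)))).
  { apply dty_intI.
    - apply dty_lam. apply dty_top. reflexivity.
    - apply dty_ax. reflexivity.
    - simpl. apply rst_step. exact (be_eta (Var 0)). }
  apply Hs in Hd. simpl in Hd. apply lty_intE2 in Hd.
  pose proof (lam_onlyom BCD None eq_refl _ _ _ Hd _ eq_refl (Some 0) (or_introl eq_refl)). discriminate.
Qed.

Theorem mainTheorem14 :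
  (* (a) soundness *)
  (sound CD eq_syn /\ sound CDV eq_syn /\ sound CDS eq_syn /\ sound BCD eq_syn /\
   sound CDS eq_beta /\ sound BCD eq_beta) /\
  (~ sound CD eq_beta /\ ~ sound CDV eq_beta /\
   ~ sound CDV eq_betaeta /\ ~ sound BCD eq_betaeta) /\
  (* (b) completeness *)
  (complete CD eq_syn /\ complete CDS eq_syn /\ complete CDV eq_syn /\ complete BCD eq_syn /\
   complete CD eq_beta /\ complete CDS eq_beta /\ complete CDV eq_beta /\ complete BCD eq_beta /\
   complete CDV eq_betaeta /\ complete BCD eq_betaeta) /\
  (* consequence: isomorphism exactly for the six sound systems *)
  (isomorphic CD eq_syn /\ isomorphic CDV eq_syn /\ isomorphic CDS eq_syn /\
   isomorphic BCD eq_syn /\ isomorphic CDS eq_beta /\ isomorphic BCD eq_beta) /\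
  (~ isomorphic CD eq_beta /\ ~ isomorphic CDV eq_beta /\
   ~ isomorphic CDV eq_betaeta /\ ~ isomorphic BCD eq_betaeta).
Proof.
  assert (Ssyn : forall Sy, sound Sy eq_syn).
  { intros Sy. apply sound_gen. intros M N E B T H. unfold eq_syn in E. subst. exact H. }
  assert (SCDS : sound CDS eq_beta).
  { apply sound_gen. intros M N E B T H. apply (eqbeta_iff CDS None eq_refl cds_appgen M N E B T). exact H. }
  assert (SBCD : sound BCD eq_beta).
  { apply sound_gen. intros M N E B T H. apply (eqbeta_iff BCD None eq_refl bcd_appgen M N E B T). exact H. }
  assert (N1 : ~ sound CD eq_beta) by exact (not_sound_None CD eq_refl 0 eq_beta red_ex_beta).
  assert (N2 : ~ sound CDV eq_beta) by exact (not_sound_None CDV eq_refl 0 eq_beta red_ex_beta).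
  assert (N3 : ~ sound CDV eq_betaeta) by exact (not_sound_None CDV eq_refl 0 eq_betaeta red_ex_betaeta).
  assert (N4 := not_sound_BCD_betaeta).
  assert (Csyn : forall Sy, complete Sy eq_syn) by (intros; apply complete_gen; reflexivity).
  assert (Cb : forall Sy, complete Sy eq_beta) by (intros; apply complete_gen; intros; apply rst_refl).
  assert (Cbe : forall Sy, complete Sy eq_betaeta) by (intros; apply complete_gen; intros; apply rst_refl).
  unfold isomorphic.
  repeat split; auto; intros [H _]; auto.
Qed.
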